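(* Fix $n\in\mathbb{N}$ and $s\in(0,1)$. Suppose that for every $i>2$ the jump kernels $j_i^{(n)}$ satisfy $\lambda_i|x-y|^{-1-2s}\le j_i^{(n)}(x,y)\le\Lambda_i|x-y|^{-1-2s}$ for all $n\ge0$ and all wires $\{x,y\}$, with constants $0<\lambda_i\le\Lambda_i<\infty$ satisfying $\lim_{i\to\infty}\lambda_i/i^2=1$ and $\lim_{i\to\infty}\Lambda_i/i^2=1$. Then $$\lim_{i\to\infty}\sum_{x\in V_{i-}^{(n)}}\sum_{y\in V_{i+}^{(n)}}j_i^{(n)}(x,y)\mu_i^{(n)}(x)\mu_i^{(n)}(y)=1.$$
   Context: Index graph: vertices $\mathbb{N}$; vertex $i$ has edges $e_{i,2i-2}$ to $2i-2$ (only if $i\ge2$), $e_{i,2i-1},e'_{i,2i-1}$ to $2i-1$, $e_{i,2i}$ to $2i$, weights $r_e>0$ with $r_{e_{i,2i-1}}=r_{e'_{i,2i-1}}$. For $e$ from $i$ to $j$, $\phi_e(x)=\frac{j}{2i}x+s_e$, $s_e=0$ for $e\in\{e_{i,2i-1},e_{i,2i}\}$, $s_e=\frac1{2i}$ for $e\in\{e_{i,2i-2},e'_{i,2i-1}\}$. $E_i^{(n)}$: paths $\sigma=e_1\cdots e_n$ of length $n$ from $i$; $\phi_\sigma=\phi_{e_1}\circ\cdots\circ\phi_{e_n}$, $\delta_\sigma=r_{e_1}\cdots r_{e_n}$. For $i>1$: $V_{i-}^{(n)}=\{k/(i2^n)\}_{k=0}^{2^n-1}$, $V_{i+}^{(n)}=\{1-k/(i2^n)\}_{k=0}^{2^n-1}$;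 the wires $\{\phi_\sigma(0),\phi_\sigma(1)\}$, $\sigma\in E_i^{(n)}$, are all pairs $\{x,y\}$ with $x\in V_{i-}^{(n)},y\in V_{i+}^{(n)}$, each with a unique path $\sigma^{(n)}_{x,y}$. $\mu_i^{(n)}(x)=\frac1{i2^n}$ for $x\in V_{i-}^{(n)}\cup V_{i+}^{(n)}$. Kernel $j_i^{(n)}(x,y)=(\delta_{\sigma^{(n)}_{x,y}}\mu_i^{(n)}(x)\mu_i^{(n)}(y))^{-1}$ on wires, $0$ otherwise. *)

(* Defs.v *)
From HB Require Import structures.
From mathcomp Require Import all_boot all_order all_algebra.
From mathcomp Require Import all_classical all_reals all_analysis.
Set Implicit Arguments. Unset Strict Implicit. Unset Printing Implicit Defensive.
Import Order.TTheory GRing.Theory Num.Theory.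
Local Open Scope ring_scope.

(* Edge labels out of a vertex i of the index graph ('I_4):
     0 : e_{i,2i-2}  (to 2i-2, only if i >= 2), shift 1/(2i)
     1 : e_{i,2i-1}  (to 2i-1),                 shift 0
     2 : e'_{i,2i-1} (to 2i-1),                 shift 1/(2i)
     3 : e_{i,2i}    (to 2i),                   shift 0          *)
Definition lbl := 'I_4.

Definition next (i : nat) (e : lbl) : nat :=
  match nat_of_ord e with
  | 0 => (2 * i - 2)%N
  | 1 => (2 * i - 1)%N
  | 2 => (2 * i - 1)%N
  | _ => (2 * i)%N
  end.

Definition valid_edge (i : nat) (e : lbl) : bool :=
  (1 <= i)%N && ((nat_of_ord e != 0%N) || (2 <= i)%N).

Definition shift {R : realType} (i : nat) (e : lbl) : R :=
  if (nat_of_ord e == 0%N) || (nat_of_ord e == 2%N) then (2 * i%:R)^-1 else 0.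

Definition phi_e {R : realType} (i : nat) (e : lbl) (x : R) : R :=
  (next i e)%:R / (2 * i%:R) * x + shift i e.

Fixpoint path_ok (i : nat) (s : seq lbl) : bool :=
  match s with
  | [::] => true
  | e :: s' => valid_edge i e && path_ok (next i e) s'
  end.

Fixpoint phi {R : realType} (i : nat) (s : seq lbl) (x : R) : R :=
  match s with
  | [::] => x
  | e :: s' => phi_e i e (phi (next i e) s' x)
  end.

Fixpoint delta {R : realType} (r : nat -> lbl -> R) (i : nat) (s : seq lbl) : R :=
  match s with
  | [::] => 1
  | e :: s' => r i e * delta r (next i e) s'
  end.

Definition Vminus {R : realType} (i n : nat) : seq R :=
  [seq k%:R / (i%:R * 2%:R ^+ n) | k <- iota 0 (2 ^ n)].
Definition Vplus {R : realType} (i n : nat) : seq R :=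
  [seq 1 - k%:R / (i%:R * 2%:R ^+ n) | k <- iota 0 (2 ^ n)].

Definition mu {R : realType} (i n : nat) (x : R) : R :=
  if (x \in Vminus (R:=R) i n) || (x \in Vplus (R:=R) i n)
  then (i%:R * 2%:R ^+ n)^-1 else 0.

Definition wire_of {R : realType} (i : nat) (s : seq lbl) (x y : R) : bool :=
  ((phi i s 0 == x) && (phi i s 1 == y)) || ((phi i s 0 == y) && (phi i s 1 == x)).

Definition is_wire {R : realType} (i n : nat) (x y : R) : Prop :=
  exists s : n.-tuple lbl, path_ok i s && wire_of i s x y.

(* jump kernel j_i^{(n)}(x,y): (delta_{sigma_{x,y}} mu(x) mu(y))^{-1} on wires,
   where sigma_{x,y} is the (unique) path of length n from i with wire {x,y};
   0 otherwise *)
Definition jker {R : realType} (r : nat -> lbl -> R) (i n : nat) (x y : R) : R :=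
  match [pick s : n.-tuple lbl | path_ok i s && wire_of i s x y] with
  | Some s => (delta r i s * mu i n x * mu i n y)^-1
  | None => 0
  end.

(* Main.v *)
Require Import Defs.
From HB Require Import structures.
From mathcomp Require Import all_boot all_order all_algebra.
From mathcomp Require Import all_classical all_reals all_analysis.
From mathcomp Require Import zify ring lra.
Import Order.TTheory GRing.Theory Num.Theory.
Import numFieldNormedType.Exports.
Local Open Scope classical_set_scope.
Local Open Scope ring_scope.

Definition e0 : lbl := @Ordinal 4 0 isT.
Definition e1 : lbl := @Ordinal 4 1 isT.
Definition e2 : lbl := @Ordinal 4 2 isT.
Definition e3 : lbl := @Ordinal 4 3 isT.

Lemma phi_cons (R : realType) i e s (x : R) :
  phi i (e :: s) x = phi_e i e (phi (Defs.next i e) s x).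
Proof. by []. Qed.

Lemma shift0 (R : realType) i : Defs.shift i e0 = (2 * i%:R)^-1 :> R. Proof. by []. Qed.
Lemma shift1 (R : realType) i : Defs.shift i e1 = 0 :> R. Proof. by []. Qed.
Lemma shift2 (R : realType) i : Defs.shift i e2 = (2 * i%:R)^-1 :> R. Proof. by []. Qed.
Lemma shift3 (R : realType) i : Defs.shift i e3 = 0 :> R. Proof. by []. Qed.

Lemma wires (R : realType) (n : nat) : forall i k l, (2 <= i)%N ->
  (k < 2 ^ n)%N -> (l < 2 ^ n)%N ->
  exists s : seq lbl, [/\ size s = n, path_ok i s,
    phi i s (0:R) = k%:R / (i%:R * 2%:R ^+ n) &
    phi i s (1:R) = 1 - l%:R / (i%:R * 2%:R ^+ n)].
Proof.
elim: n => [|n IH] i k l hi hk hl.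
  have k0 : k = 0%N by rewrite expn0 in hk; lia.
  have l0 : l = 0%N by rewrite expn0 in hl; lia.
  by subst; exists [::]; split => //=; rewrite mul0r ?subr0.
have hI : (2:R) <= i%:R by rewrite (ler_nat R 2 i).
have hP : (0:R) < 2%:R ^+ n by rewrite exprn_gt0.
have hk2 : (k < 2 ^ n)%N \/ (k = (k - 2 ^ n) + 2 ^ n /\ (k - 2^n < 2^n))%N.
  by rewrite expnS in hk; lia.
have hl2 : (l < 2 ^ n)%N \/ (l = (l - 2 ^ n) + 2 ^ n /\ (l - 2^n < 2^n))%N.
  by rewrite expnS in hl; lia.
have E1 : ((2 * i - 1)%N%:R : R) = 2 * i%:R - 1 by rewrite (natrB R (_ : 1 <= 2 * i)%N) ?(natrM R 2 i) //; lia.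
have E0 : ((2 * i - 2)%N%:R : R) = 2 * i%:R - 2 by rewrite (natrB R (_ : 2 <= 2 * i)%N) ?(natrM R 2 i) //; lia.
have E3 : ((2 * i)%N%:R : R) = 2 * i%:R by rewrite (natrM R 2 i).
have Ek : forall m, (m = (m - 2 ^ n) + 2 ^ n)%N -> (m%:R : R) = (m - 2^n)%N%:R + 2 ^+ n.
  by move=> m hm; rewrite {1}hm (natrD R) (natrX R).
case: hk2 => [hk'|[hk' hk'']]; case: hl2 => [hl'|[hl' hl'']].
- have [|s [s1 s2 s3 s4]] := IH (2 * i)%N k l _ hk' hl'; first by lia.
  exists (e3 :: s); split; first by rewrite /= s1.
    by rewrite /= s2 andbT /valid_edge /=; lia.
  1,2: rewrite (phi_cons _ i e3 s) /phi_e ?s3 ?s4 shift3 E3 exprS; field;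
     rewrite ?mulf_neq0 ?gt_eqF //; lra.
- have [|s [s1 s2 s3 s4]] := IH (2 * i - 1)%N k (l - 2^n)%N _ hk' hl''; first by lia.
  exists (e1 :: s); split; first by rewrite /= s1.
    by rewrite /= s2 andbT /valid_edge /=; lia.
  1,2: rewrite (phi_cons _ i e1 s) /phi_e ?s3 ?s4 shift1 ?(Ek l) // E1 exprS; field;
     rewrite ?mulf_neq0 ?gt_eqF //; lra.
- have [|s [s1 s2 s3 s4]] := IH (2 * i - 1)%N (k - 2^n)%N l _ hk'' hl'; first by lia.
  exists (e2 :: s); split; first by rewrite /= s1.
    by rewrite /= s2 andbT /valid_edge /=; lia.
  1,2: rewrite (phi_cons _ i e2 s) /phi_e ?s3 ?s4 shift2 ?(Ek k) // E1 exprS; field;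
     rewrite ?mulf_neq0 ?gt_eqF //; lra.
- have [|s [s1 s2 s3 s4]] := IH (2 * i - 2)%N (k - 2^n)%N (l - 2^n)%N _ hk'' hl''; first by lia.
  exists (e0 :: s); split; first by rewrite /= s1.
    by rewrite /= s2 andbT /valid_edge /=; lia.
  1,2: rewrite (phi_cons _ i e0 s) /phi_e ?s3 ?s4 shift0 ?(Ek k) ?(Ek l) // E0 exprS; field;
     rewrite ?mulf_neq0 ?gt_eqF //; lra.
Qed.
Lemma sum_const_seq (R : realType) (T : Type) (s : seq T) (a : R) :
  \sum_(x <- s) a = a *+ size s.
Proof. by elim: s => [|x s IH]; rewrite ?big_nil ?big_cons ?IH ?mulrS. Qed.

Lemma term_bounds (R : realType) (s : R) i n k l : (2 < i)%N -> 0 < s -> s < 1 ->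
  (k < 2^n)%N -> (l < 2^n)%N ->
  1 <= `|k%:R / (i%:R * 2^+n) - (1 - l%:R / (i%:R * 2^+n))| `^ (-1 - 2*s)
    <= ((1 - 2 / i%:R)^+3)^-1.
Proof.
move=> hi s0 s1 hk hl.
have hI : (3:R) <= i%:R by rewrite (ler_nat R 3 i).
have hP : (0:R) < 2^+n by rewrite exprn_gt0.
have hK : (k%:R + 1 <= 2^+n :> R).
  have : ((k.+1)%:R <= (2^n)%:R :> R) by rewrite ler_nat.
  by rewrite -natr1 natrX.
have hL : (l%:R + 1 <= 2^+n :> R).
  have : ((l.+1)%:R <= (2^n)%:R :> R) by rewrite ler_nat.
  by rewrite -natr1 natrX.
have hk0 : (0:R) <= k%:R by [].
have hl0 : (0:R) <= l%:R by [].
set I := (i%:R : R) in hI *. set P := (2^+n : R) in hP hK hL *.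
have hIP : 0 < I * P by rewrite mulr_gt0 //; lra.
set t := (k%:R + l%:R) / (I * P).
have ht0 : 0 <= t by rewrite /t divr_ge0 // ?addr_ge0 // ltW.
have ht2 : t <= 2 / I.
  rewrite /t ler_pdivrMr //.
  have -> : 2 / I * (I * P) = 2 * P by field; rewrite gt_eqF //; lra.
  lra.
have h2I : 2 / I < 1 by rewrite ltr_pdivrMr ?mul1r; lra.
have hxy : k%:R / (I * P) - (1 - l%:R / (I * P)) = t - 1.
  by rewrite /t; field; rewrite ?mulf_neq0 ?gt_eqF //; lra.
rewrite hxy ltr0_norm; last by lra.
rewrite opprB.
have hd0 : 0 < 1 - t <= 1 by apply/andP; split; lra.
apply/andP; split.
  rewrite -[X in X <= _](powRr0 (1 - t)); apply: ger_powR => //; lra.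
apply: (le_trans (y := (1 - t) `^ (- 3%:R))).
  by apply: ger_powR => //; lra.
rewrite powR_invn; last by lra.
rewrite lef_pV2 ?posrE ?exprn_gt0 //; try lra.
by apply: lerXn2r; rewrite ?nnegrE; lra.
Qed.

Lemma wire_all (R : realType) i n k l : (2 <= i)%N -> (k < 2^n)%N -> (l < 2^n)%N ->
  is_wire i n (k%:R / (i%:R * 2^+n) : R) (1 - l%:R / (i%:R * 2^+n)).
Proof.
move=> hi hk hl.
have [s [s1 s2 s3 s4]] := wires R n i k l hi hk hl.
have hs : size s == n by rewrite s1.
exists (Tuple hs); rewrite /= s2 /wire_of s3 s4 !eqxx //.
Qed.

Lemma mu_minus (R : realType) i n k : (k < 2^n)%N ->
  mu i n (k%:R / (i%:R * 2^+n) : R) = (i%:R * 2^+n)^-1.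
Proof.
move=> hk; rewrite /mu.
have -> : (k%:R / (i%:R * 2^+n) : R) \in Vminus i n.
  by apply/mapP; exists k => //; rewrite mem_iota add0n.
by [].
Qed.

Lemma mu_plus (R : realType) i n k : (k < 2^n)%N ->
  mu i n (1 - k%:R / (i%:R * 2^+n) : R) = (i%:R * 2^+n)^-1.
Proof.
move=> hk; rewrite /mu.
have -> : (1 - k%:R / (i%:R * 2^+n) : R) \in Vplus i n.
  by apply/mapP; exists k => //; rewrite mem_iota add0n.
by rewrite orbT.
Qed.

Lemma inv_cvg0 (R : realType) : (fun i : nat => (i%:R : R)^-1) @ \oo --> (0 : R).
Proof. by rewrite -cvg_shiftS; exact: cvg_harmonic. Qed.

Lemma g_cvg (R : realType) :
  (fun i : nat => ((1 - 2 / (i%:R : R))^+3)^-1) @ \oo --> (1 : R).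
Proof.
have h : (fun i : nat => 1 - 2 * (i%:R : R)^-1) @ \oo --> (1 - 2 * 0 : R).
  apply: cvgB; first exact: cvg_cst.
  by apply: cvgM; [exact: cvg_cst | exact: inv_cvg0].
rewrite mulr0 subr0 in h.
have h2 : (fun i:nat => (1 - 2/(i%:R:R)) * ((1 - 2/i%:R) * (1 - 2/i%:R))) @ \oo --> (1 * (1*1) : R).
  by apply: cvgM => //; apply: cvgM.
rewrite !mulr1 in h2.
have h3 : (fun i:nat => ((1 - 2/(i%:R:R)) * ((1 - 2/i%:R) * (1 - 2/i%:R)))^-1) @ \oo --> (1^-1 : R).
  exact: (cvgV (oner_neq0 R) h2).
rewrite invr1 in h3.
apply: cvg_trans h3; apply: near_eq_cvg; near=> i.
by rewrite /= !exprS expr0 mulr1.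
Unshelve. all: by end_near.
Qed.

Theorem lemma6p2 (R : realType) (r : nat -> lbl -> R)
  (r_pos : forall (i : nat) (e : lbl), valid_edge i e -> 0 < r i e)
  (r_sym : forall i : nat, r i (inord 1) = r i (inord 2))
  (n : nat) (s : R) (s_pos : 0 < s) (s_lt1 : s < 1)
  (lam Lam : nat -> R)
  (lam_pos : forall i : nat, (2 < i)%N -> 0 < lam i)
  (lam_le : forall i : nat, (2 < i)%N -> lam i <= Lam i)
  (hbound : forall (i m : nat) (x y : R), (2 < i)%N -> is_wire i m x y ->
     lam i * (`|x - y| `^ (-1 - 2 * s)) <= jker r i m x y
     /\ jker r i m x y <= Lam i * (`|x - y| `^ (-1 - 2 * s)))
  (hlam : (fun i : nat => lam i / (i%:R ^+ 2)) @ \oo --> (1 : R))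
  (hLam : (fun i : nat => Lam i / (i%:R ^+ 2)) @ \oo --> (1 : R)) :
  (fun i : nat => \sum_(x <- Vminus i n) \sum_(y <- Vplus i n)
       jker r i n x y * mu i n x * mu i n y) @ \oo --> (1 : R).
Proof.
have hU : (fun i : nat => Lam i / (i%:R ^+ 2) * ((1 - 2 / (i%:R : R))^+3)^-1) @ \oo --> (1 * 1 : R).
  by apply: cvgM => //; exact: g_cvg.
rewrite mulr1 in hU.
apply: (squeeze_cvgr _ hlam hU).
near=> i.
have hi : (2 < i)%N by near: i; exists 3%N => // j /=.
set c := ((i%:R : R) * 2^+n)^-1.
set g := (((1 - 2 / i%:R)^+3)^-1 : R).
have hc : 0 <= c by rewrite invr_ge0 mulr_ge0 // exprn_ge0.
have hcc : c * c *+ 2 ^ n *+ 2 ^ n = (i%:R ^+ 2)^-1.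
  rewrite -mulrnA -(mulr_natr (c * c)) (natrM R) (natrX R 2 n) /c; field.
  by rewrite ?mulf_neq0 ?gt_eqF ?exprn_gt0 //; rewrite (ltr_nat R 0 i); lia.
have hcc' : forall a, a * (c * c) *+ 2^n *+ 2^n = a * (i%:R ^+ 2)^-1.
  by move=> a; rewrite -hcc !mulrnAr.
rewrite /Vminus /Vplus big_map.
under eq_bigr => k _ do rewrite big_map.
rewrite big_seq.
under eq_bigr => k hk do rewrite big_seq.
apply/andP; split.
- have -> : lam i / i%:R ^+ 2 =
     \sum_(k <- iota 0 (2^n) | k \in iota 0 (2^n))
        \sum_(l <- iota 0 (2^n) | l \in iota 0 (2^n)) (lam i * c * c).
    by rewrite -!big_seq !sum_const_seq size_iota -(mulrA (lam i) c c) hcc'.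
  apply: ler_sum => k; rewrite mem_iota add0n => /andP[_ hk].
  apply: ler_sum => l; rewrite mem_iota add0n => /andP[_ hl].
  rewrite mu_minus // mu_plus //.
  rewrite ler_wpM2r // ler_wpM2r //.
  have [h1 _] := hbound i n _ _ hi (wire_all R i n k l (ltnW hi) hk hl).
  apply: le_trans h1.
  have /andP[hb _] := term_bounds R s i n k l hi s_pos s_lt1 hk hl.
  by rewrite -[X in X <= _]mulr1 ler_wpM2l // ltW // lam_pos.
- have -> : Lam i / i%:R ^+ 2 * g =
     \sum_(k <- iota 0 (2^n) | k \in iota 0 (2^n))
        \sum_(l <- iota 0 (2^n) | l \in iota 0 (2^n))
          (Lam i * g * c * c).
    rewrite -!big_seq !sum_const_seq size_iota.
    by rewrite -(mulrA (Lam i * g) c c) hcc' mulrAC.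
  apply: ler_sum => k; rewrite mem_iota add0n => /andP[_ hk].
  apply: ler_sum => l; rewrite mem_iota add0n => /andP[_ hl].
  rewrite mu_minus // mu_plus //.
  rewrite ler_wpM2r // ler_wpM2r //.
  have [_ h2] := hbound i n _ _ hi (wire_all R i n k l (ltnW hi) hk hl).
  apply: le_trans h2 _.
  have /andP[_ hb] := term_bounds R s i n k l hi s_pos s_lt1 hk hl.
  rewrite ler_wpM2l //; apply: ltW; apply: (lt_le_trans (lam_pos i hi)).
  exact: lam_le.
Unshelve. all: by end_near.
Qed.
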